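(* Let $R$ be a QNA with Goodearl–Yakimov elements $y_1,\ldots,y_N$. For all $i,j\in[1,N]$ with $i\neq j$, we have $y_iR\cap y_jR=y_iy_jR$.
   Context: ${\mathbb K}$ is a field of characteristic $0$. A quantum nilpotent algebra (QNA) is an iterated Ore extension $R={\mathbb K}[x_1][x_2;\sigma_2,\delta_2]\cdots[x_N;\sigma_N,\delta_N]$, where $R_k={\mathbb K}[x_1][x_2;\sigma_2,\delta_2]\cdots[x_k;\sigma_k,\delta_k]$ ($R_0={\mathbb K}$), $\sigma_k$ is a ${\mathbb K}$-automorphism and $\delta_k$ a $\sigma_k$-derivation of $R_{k-1}$, together with a torus $\mathcal H$ acting rationally by ${\mathbb K}$-automorphisms on $R$ with each $x_i$ an $\mathcal H$-eigenvector, such that: (i) $\sigma_k(x_j)=\lambda_{kj}x_j$ for $j<k$, with $\lambda_{kj}\in{\mathbb K}^*$; (ii) $\delta_k$ is locally nilpotent on $R_{k-1}$; (iii) for each $k$ there exist $h_k\in\mathcal H$ and $q_k\in{\mathbb K}^*$ not a root of unity such that $h_k$ acts on $R_{k-1}$ as $\sigma_k$ and $h_k\cdot x_k=q_kx_k$. The rank is $n=|\{k:\delta_k=0\}|$ and $\mathcal H=({\mathbb K}^* )^n$ is taken maximal. Homogeneous elements are the $\mathcal H$-eigenvectors. An element $u$ is normal if $uR=Ru$; a prime element is a nonzero normal $p$ with $pR$ a completely prime ideal. Goodearl–Yakimov elements: there is a surjective map $\mu:[1,N]\to[1,n]$ with predecessor $p(k)=\max\{j<k:\mu(j)=\mu(k)\}$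 (or $-\infty$ if none) and successor $s(k)=\min\{j>k:\mu(j)=\mu(k)\}$ (or $+\infty$ if none), and homogeneous elements $y_1,\ldots,y_N\in R$, uniquely determined, with $y_k=x_k$ if $p(k)=-\infty$ and $y_k=y_{p(k)}x_k-c_k$ for some $c_k\in R_{k-1}$ otherwise, such that for every $k$ the set $\{y_j: j\le k,\ s(j)>k\}$ is, up to nonzero scalars, the set of homogeneous prime elements of $R_k$. The $y_i$ pairwise quasi-commute. *)

(* Defs.v *)
From HB Require Import structures.
From mathcomp Require Import all_boot all_order all_algebra.
Set Implicit Arguments. Unset Strict Implicit. Unset Printing Implicit Defensive.
Import GRing.Theory.
Local Open Scope ring_scope.

Section QNADefs.
Variables (K : fieldType) (R : algType K).

(* R_k : the K-subalgebra of R generated by x_1, ..., x_k (R_0 = K). *)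
Inductive gen_sub (x : nat -> R) (k : nat) : R -> Prop :=
| gen_const (c : K) : gen_sub x k (c%:A)
| gen_var (j : nat) : (1 <= j <= k)%N -> gen_sub x k (x j)
| gen_add (a b : R) : gen_sub x k a -> gen_sub x k b -> gen_sub x k (a + b)
| gen_mul (a b : R) : gen_sub x k a -> gen_sub x k b -> gen_sub x k (a * b).

Definition alg_auto_on (S : R -> Prop) (f : R -> R) : Prop :=
  (((forall a, S a -> S (f a))) /\ ((forall a b, S a -> S b -> f (a + b) = f a + f b)) /\ ((forall a b, S a -> S b -> f (a * b) = f a * f b)) /\ (f 1 = 1) /\ ((forall (c : K) a, S a -> f (c *: a) = c *: f a)) /\ ((forall a b, S a -> S b -> f a = f b -> a = b)) /\ ((forall b, S b -> exists a, S a /\ f a = b))).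

Definition sigma_derivation_on (S : R -> Prop) (s d : R -> R) : Prop :=
  (((forall a, S a -> S (d a))) /\ ((forall a b, S a -> S b -> d (a + b) = d a + d b)) /\ ((forall (c : K) a, S a -> d (c *: a) = c *: d a)) /\ ((forall a b, S a -> S b -> d (a * b) = s a * d b + d a * b))).

(* T = S[xk; s, d] (internal characterization of an Ore extension):
   s is an automorphism of S, d an s-derivation, xk r = s(r) xk + d(r),
   and T is a free left S-module with basis 1, xk, xk^2, ... *)
Definition ore_step (S T : R -> Prop) (xk : R) (s d : R -> R) : Prop :=
  ((alg_auto_on S s) /\ (sigma_derivation_on S s d) /\ ((forall r, S r -> xk * r = s r * xk + d r)) /\ ((forall t, T t -> exists (m : nat) (r : nat -> R),
            (forall i, S (r i)) /\ t = \sum_(i < m) r i * xk ^+ i)) /\ ((forall (m : nat) (r : nat -> R), (forall i, (i < m)%N -> S (r i)) ->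
          \sum_(i < m) r i * xk ^+ i = 0 -> forall i, (i < m)%N -> r i = 0))).

Definition torus_elt (n : nat) (h : 'I_n -> K) : Prop := forall l, h l != 0.

Definition torus_one (n : nat) : 'I_n -> K := fun _ => 1.
Definition torus_mul (n : nat) (h h' : 'I_n -> K) : 'I_n -> K :=
  fun l => h l * h' l.

Definition torus_action (n : nat) (act : ('I_n -> K) -> R -> R) : Prop :=
  (((forall h, torus_elt h -> alg_auto_on (fun _ => True) (act h))) /\ ((forall r, act (@torus_one n) r = r)) /\ ((forall h h', torus_elt h -> torus_elt h' ->
          forall r, act (torus_mul h h') r = act h (act h' r)))).

Definition homogeneous (n : nat) (act : ('I_n -> K) -> R -> R) (u : R) : Prop :=
  u != 0 /\ forall h, torus_elt h -> exists c : K, act h u = c *: u.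

Definition not_root_of_unity (q : K) : Prop :=
  q != 0 /\ forall m : nat, (0 < m)%N -> q ^+ m != 1.

Definition QNA (N n : nat) (x : nat -> R) (sigma delta : nat -> R -> R)
    (act : ('I_n -> K) -> R -> R) : Prop :=
  (((* iterated Ore extension R = K[x1][x2;s2,d2]...[xN;sN,dN] *)
   (forall r : R, gen_sub x N r)) /\ ((forall k, (1 <= k <= N)%N ->
      ore_step (gen_sub x k.-1) (gen_sub x k) (x k) (sigma k) (delta k))) /\ (
   (forall k j, (1 <= j)%N -> (j < k)%N -> (k <= N)%N ->
      exists lam : K, lam != 0 /\ sigma k (x j) = lam *: x j)) /\ (
   (forall k, (1 <= k <= N)%N -> forall r, gen_sub x k.-1 r ->
      exists m : nat, iter m (delta k) r = 0)) /\ ((* rational action of the torus H = (K^* )^n, the x_i being H-eigenvectors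
      (the eigencharacters of a rational torus action are monomial) *)
   torus_action act) /\ ((forall i, (1 <= i <= N)%N -> exists w : 'I_n -> int,
      forall h, torus_elt h -> act h (x i) = (\prod_(l < n) h l ^ w l) *: x i)) /\ (
   (forall k, (1 <= k <= N)%N -> exists (h : 'I_n -> K) (q : K),
      ((torus_elt h) /\ (not_root_of_unity q) /\ ((forall r, gen_sub x k.-1 r -> act h r = sigma k r)) /\ (act h (x k) = q *: x k)))) /\ ((* n is the rank: n = #{k : delta_k = 0} *)
   (exists s : seq nat, ((uniq s) /\ (size s = n) /\ (forall k, k \in s <-> ((1 <= k <= N)%N /\
                             forall r, gen_sub x k.-1 r -> delta k r = 0))))) /\ ((* H is maximal: it acts faithfully and every K-algebra automorphism of R
      rescaling each x_i by a nonzero scalar comes from H *)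
   ((forall h, torus_elt h -> (forall r, act h r = r) -> h = @torus_one n) /\
    (forall f, alg_auto_on (fun _ => True) f ->
      (forall i, (1 <= i <= N)%N -> exists c : K, c != 0 /\ f (x i) = c *: x i) ->
      exists h, torus_elt h /\ forall r, f r = act h r)))).

Definition normal_in (S : R -> Prop) (u : R) : Prop :=
  ((S u) /\ ((forall r, S r -> exists r', S r' /\ u * r = r' * u)) /\ ((forall r, S r -> exists r', S r' /\ r * u = u * r'))).

Definition in_right_ideal (S : R -> Prop) (u a : R) : Prop :=
  exists s, S s /\ a = u * s.

Definition prime_elt_in (S : R -> Prop) (u : R) : Prop :=
  ((u != 0) /\ (normal_in S u) /\ (~ in_right_ideal S u 1) /\ ((forall a b, S a -> S b -> in_right_ideal S u (a * b) ->
          in_right_ideal S u a \/ in_right_ideal S u b))).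

Definition GY_elements (N n : nat) (x : nat -> R) (act : ('I_n -> K) -> R -> R)
    (mu : nat -> nat) (y : nat -> R) : Prop :=
  (((forall k, (1 <= k <= N)%N -> (1 <= mu k <= n)%N)) /\ ((forall l, (1 <= l <= n)%N -> exists k, (1 <= k <= N)%N /\ mu k = l)) /\ ((forall k, (1 <= k <= N)%N -> homogeneous act (y k))) /\ (
   (forall k, (1 <= k <= N)%N ->
      (forall j, (1 <= j)%N -> (j < k)%N -> mu j <> mu k) -> y k = x k)) /\ (
   (forall k j, (1 <= j)%N -> (j < k)%N -> (k <= N)%N -> mu j = mu k ->
      (forall j', (j < j')%N -> (j' < k)%N -> mu j' <> mu k) ->
      exists c, gen_sub x k.-1 c /\ y k = y j * x k - c)) /\ ((* {y_j : j <= k, s(j) > k} is, up to scalars, the set of homogeneous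
      prime elements of R_k *)
   (forall k, (1 <= k <= N)%N ->
      (forall j, (1 <= j <= k)%N ->
         (forall j', (j < j' <= k)%N -> mu j' <> mu j) ->
         homogeneous act (y j) /\ prime_elt_in (gen_sub x k) (y j)) /\
      (forall u, homogeneous act u -> prime_elt_in (gen_sub x k) u ->
         exists j (c : K), (((1 <= j <= k)%N) /\ ((forall j', (j < j' <= k)%N -> mu j' <> mu j)) /\ (c != 0) /\ (u = c *: y j))))) /\ (
   (forall i j, (1 <= i <= N)%N -> (1 <= j <= N)%N ->
      exists alpha : K, alpha != 0 /\ y i * y j = alpha *: (y j * y i)))).

End QNADefs.

(* Main.v *)
Require Import Defs.
From HB Require Import structures.
From mathcomp Require Import all_boot all_order all_algebra.
Import GRing.Theory.
Local Open Scope ring_scope.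
From Stdlib Require Import Classical.
From mathcomp Require Import zify.
Set Implicit Arguments. Unset Strict Implicit. Unset Printing Implicit Defensive.

Section Ore.
Variables (K : fieldType) (R : algType K) (S : R -> Prop) (x : R) (sg dl : R -> R).
Hypotheses (S0 : S 0) (SD : forall a b, S a -> S b -> S (a + b))
  (SM : forall a b, S a -> S b -> S (a * b)) (SN : forall a, S a -> S (- a))
  (Ssg : forall a, S a -> S (sg a)) (Sdl : forall a, S a -> S (dl a))
  (comm : forall r, S r -> x * r = sg r * x + dl r).

Definition L d t := exists r : nat -> R, (forall i, S (r i)) /\ t = \sum_(i < d) r i * x ^+ i.

Lemma L_ind (P : R -> Prop) d : P 0 -> (forall a b, P a -> P b -> P (a + b)) ->
  (forall r i, S r -> (i < d)%N -> P (r * x ^+ i)) -> forall t, L d t -> P t.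
Proof.
move=> P0 PD Pm t [r [Sr ->]]; apply: big_ind => // k _; exact: Pm (ltn_ord k).
Qed.

Lemma L0 d : L d 0.
Proof. exists (fun _ => 0); split => //; by rewrite big1 // => i _; rewrite mul0r. Qed.

Lemma LD d a b : L d a -> L d b -> L d (a + b).
Proof.
move=> [r [Sr ->]] [r' [Sr' ->]]; exists (fun i => r i + r' i); split; first by move=> i; apply: SD.
rewrite [RHS](eq_bigr (fun i : 'I_d => r i * x ^+ i + r' i * x ^+ i)); last by move=> i _; rewrite mulrDl.
by rewrite big_split.
Qed.

Lemma Lmono d e t : (d <= e)%N -> L d t -> L e t.
Proof.
move=> de [r [Sr ->]]; exists (fun i => if (i < d)%N then r i else 0); split.
  by move=> i; case: ifP.
rewrite (big_ord_widen e (fun i => r i * x ^+ i) de) big_mkcond /=.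
by apply: eq_bigr => i _; case: ifP => //; rewrite mul0r.
Qed.

Lemma Lmon d r i : S r -> (i < d)%N -> L d (r * x ^+ i).
Proof.
move=> Sr id; apply: (Lmono id); exists (fun k => if k == i then r else 0); split.
  by move=> k; case: ifP.
rewrite big_ord_recr /= eqxx big1 ?add0r // => k _.
by rewrite ltn_eqF ?ltn_ord // mul0r.
Qed.

Lemma LN d a : L d a -> L d (- a).
Proof.
move=> La; apply: (L_ind (P := fun a => L d (- a))) La.
- by rewrite oppr0; apply: L0.
- by move=> a1 b1 h1 h2; rewrite opprD; apply: LD.
- by move=> r i Sr id; rewrite -mulNr; apply: Lmon => //; apply: SN.
Qed.

Lemma LSl d u t : S u -> L d t -> L d (u * t).
Proof.
move=> Su; apply: (L_ind (P := fun t => L d (u * t))).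
- by rewrite mulr0; apply: L0.
- by move=> a b h1 h2; rewrite mulrDr; apply: LD.
- by move=> r i Sr id; rewrite mulrA; apply: Lmon => //; apply: SM.
Qed.

Lemma LxrN d e t : L d t -> L (d + e) (t * x ^+ e).
Proof.
move=> Lt; apply: (L_ind (P := fun t => L (d + e) (t * x ^+ e))) Lt.
- by rewrite mul0r; apply: L0.
- by move=> a b h1 h2; rewrite mulrDl; apply: LD.
- by move=> r i Sr id; rewrite -mulrA -exprD; apply: Lmon => //; rewrite ltn_add2r.
Qed.

Lemma Lxl d t : L d t -> L d.+1 (x * t).
Proof.
move=> Lt; apply: (L_ind (P := fun t => L d.+1 (x * t))) Lt.
- by rewrite mulr0; apply: L0.
- by move=> a b h1 h2; rewrite mulrDr; apply: LD.
- move=> r i Sr id; rewrite mulrA comm // mulrDl -mulrA -exprS.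
  apply: LD; apply: Lmon => //; first exact: Ssg.
  + exact: Sdl.
  + exact: ltnW.
Qed.

Lemma Siter m u : S u -> S (iter m sg u).
Proof. by move=> Su; elim: m => //= m IH; apply: Ssg. Qed.

Lemma K1 u m : S u -> exists l, L m l /\ x ^+ m * u = iter m sg u * x ^+ m + l.
Proof.
move=> Su; elim: m => [|m [l [Ll E]]].
  by exists 0; split; [apply: L0 | rewrite expr0 mulr1 mul1r addr0].
exists (dl (iter m sg u) * x ^+ m + x * l); split.
  apply: LD; first by apply: Lmon => //; apply: Sdl; apply: Siter.
  exact: Lxl.
rewrite exprS -mulrA E mulrDr mulrA.
rewrite (comm (Siter m Su)) mulrDl -(mulrA _ x) -exprS /= addrA.
done.
Qed.

Lemma PM r r' i i' : S r -> S r' -> exists l, L (i + i') l /\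
  (r * x ^+ i) * (r' * x ^+ i') = (r * iter i sg r') * x ^+ (i + i') + l.
Proof.
move=> Sr Sr'; have [l [Ll E]] := K1 i Sr'.
exists (r * (l * x ^+ i')); split; first by apply: LSl => //; apply: LxrN.
by rewrite -mulrA (mulrA (x ^+ i)) E mulrDl mulrDr -mulrA -exprD mulrA.
Qed.

Lemma PMin r r' i i' f : S r -> S r' -> (i + i' < f)%N -> L f ((r * x ^+ i) * (r' * x ^+ i')).
Proof.
move=> Sr Sr' lt; have [l [Ll ->]] := PM i i' Sr Sr'.
apply: LD; first by apply: Lmon => //; apply: SM => //; apply: Siter.
by apply: Lmono Ll; apply: ltnW.
Qed.

Lemma LLmul d e f a b : L d a -> L e b ->
  (forall i i', (i < d)%N -> (i' < e)%N -> (i + i' < f)%N) -> L f (a * b).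
Proof.
move=> La Lb H; apply: (L_ind (P := fun a => L f (a * b))) La.
- by rewrite mul0r; apply: L0.
- by move=> a1 b1 h1 h2; rewrite mulrDl; apply: LD.
move=> r i Sr id; apply: (L_ind (P := fun b => L f (r * x ^+ i * b))) Lb.
- by rewrite mulr0; apply: L0.
- by move=> a1 b1 h1 h2; rewrite mulrDr; apply: LD.
by move=> r' i' Sr' i'e; apply: PMin => //; apply: H.
Qed.

Lemma LP s s' d e l l' : S s -> S s' -> L d l -> L e l' -> exists l'', L (d + e) l'' /\
  (s * x ^+ d + l) * (s' * x ^+ e + l') = (s * iter d sg s') * x ^+ (d + e) + l''.
Proof.
move=> Ss Ss' Ll Ll'; have [l1 [Ll1 E]] := PM d e Ss Ss'.
exists (l1 + (s * x ^+ d * l' + (l * (s' * x ^+ e) + l * l'))); split.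
  apply: LD => //; apply: LD.
    apply: (LLmul (d := d.+1) (e := e)); first exact: Lmon.
      done.
    by move=> i i' /= id ie; lia.
  apply: LD.
    apply: (LLmul (d := d) (e := e.+1)) => //; first exact: Lmon.
    by move=> i i' /= id ie; lia.
  apply: (LLmul (d := d) (e := e)) => //.
  by move=> i i' /= id ie; lia.
by rewrite mulrDl !mulrDr E -!addrA.
Qed.

Hypothesis free : forall (m : nat) (r : nat -> R), (forall i, (i < m)%N -> S (r i)) ->
          \sum_(i < m) r i * x ^+ i = 0 -> forall i, (i < m)%N -> r i = 0.


Lemma mulsum u n (c : nat -> R) : u * (\sum_(i < n) c i * x ^+ i) = \sum_(i < n) (u * c i) * x ^+ i.
Proof. by rewrite big_distrr /=; apply: eq_bigr => i _; rewrite mulrA. Qed.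

Lemma combine u v n (c : nat -> R) :
  (forall i, (i < n)%N -> exists t, S t /\ c i = u * v * t) ->
  exists t, L n t /\ \sum_(i < n) c i * x ^+ i = u * v * t.
Proof.
elim: n => [|n IH] H.
  by exists 0; split; [apply: L0 | rewrite big_ord0 mulr0].
have [t0 [Lt0 E0]] := IH (fun i lt => H i (ltnW lt)).
have [t1 [St1 E1]] := H n (ltnSn n).
exists (t0 + t1 * x ^+ n); split.
  by apply: LD; [apply: Lmono Lt0 | apply: Lmon].
by rewrite big_ord_recr /= E0 E1 mulrDr !mulrA.
Qed.

Lemma Lstep (T : R -> Prop) (Tdec : forall t, T t -> exists (m : nat) (r : nat -> R),
            (forall i, S (r i)) /\ t = \sum_(i < m) r i * x ^+ i) u v :
  S u -> S v -> (forall r s, S r -> S s -> u * r = v * s -> exists t, S t /\ u * r = u * v * t) ->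
  forall r s, T r -> T s -> u * r = v * s -> exists M t, L M t /\ u * r = u * v * t.
Proof.
move=> Su Sv IH r s /Tdec [m [a [Sa Er]]] /Tdec [m' [b [Sb Es]]] E.
have [a' [Sa' Er']] : L (m + m') r by apply: (Lmono (leq_addr m' m)); exists a.
have [b' [Sb' Es']] : L (m + m') s by apply: (Lmono (leq_addl m m')); exists b.
have eq : forall i, (i < m + m')%N -> u * a' i = v * b' i.
  move=> i lt; apply/eqP; rewrite -subr_eq0; apply/eqP.
  apply: (free (m := m + m') (r := fun i => u * a' i - v * b' i)) => //.
    by move=> k _; apply: SD; [apply: SM | apply: SN; apply: SM].
  rewrite [LHS](eq_bigr (fun i : 'I_(m+m') => u * a' i * x ^+ i - v * b' i * x ^+ i)).
    by rewrite sumrB -!mulsum -Er' -Es' E subrr.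
  by move=> k _; rewrite mulrBl.
have [t [Lt Et]] := combine (c := fun i => u * a' i) (n := m + m') (u := u) (v := v)
  (fun i lt => IH _ _ (Sa' i) (Sb' i) (eq i lt)).
by exists (m + m'), t; split => //; rewrite Er' mulsum.
Qed.

Lemma U s d l : S s -> L d l -> s * x ^+ d + l = 0 -> s = 0.
Proof.
move=> Ss [r [Sr ->]] E.
have := free (m := d.+1) (r := fun k => if k == d then s else r k) _ _ (ltnSn d).
rewrite eqxx; apply.
  by move=> i _; case: ifP.
rewrite big_ord_recr /= eqxx -[RHS]E addrC; congr (_ + _).
by apply: eq_bigr => i _; rewrite ltn_eqF.
Qed.

Lemma Dec m (r : nat -> R) : (forall i, S (r i)) -> \sum_(i < m) r i * x ^+ i != 0 ->
  exists d s l, S s /\ s != 0 /\ L d l /\ \sum_(i < m) r i * x ^+ i = s * x ^+ d + l.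
Proof.
move=> Sr; elim: m => [|m IH]; first by rewrite big_ord0 eqxx.
rewrite big_ord_recr /=; case: (eqVneq (r m) 0) => [->|nz] H.
  by move: H; rewrite mul0r addr0 => /IH.
exists m, (r m), (\sum_(i < m) r i * x ^+ i); split => //; split => //; split.
  by exists r.
by rewrite addrC.
Qed.

Hypotheses (sgD : forall a b, S a -> S b -> sg (a + b) = sg a + sg b)
  (sginj : forall a b, S a -> S b -> sg a = sg b -> a = b)
  (DS : forall a b, S a -> S b -> a * b = 0 -> a = 0 \/ b = 0).

Lemma sg0 : sg 0 = 0.
Proof. by apply/eqP; rewrite -(addrI (sg 0) (_ : _ + 0 = _ + sg 0)) // addr0 -sgD // addr0. Qed.

Lemma iter0 m u : S u -> iter m sg u = 0 -> u = 0.
Proof.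
move=> Su; elim: m => //= m IH E; apply: IH.
by apply: sginj; rewrite ?sg0 //; apply: Siter.
Qed.

Variable T : R -> Prop.
Hypothesis Tdec : forall t, T t -> exists (m : nat) (r : nat -> R),
            (forall i, S (r i)) /\ t = \sum_(i < m) r i * x ^+ i.

Lemma TDec t : T t -> t != 0 -> exists d s l, S s /\ s != 0 /\ L d l /\ t = s * x ^+ d + l.
Proof. by move=> /Tdec [m [r [Sr ->]]]; apply: Dec. Qed.

Lemma TDomain a b : T a -> T b -> a * b = 0 -> a = 0 \/ b = 0.
Proof.
move=> Ta Tb E; apply: NNPP => H.
have na : a != 0 by apply/eqP => h; apply: H; left.
have nb : b != 0 by apply/eqP => h; apply: H; right.
have [d [s [l [Ss [ns [Ll Ea]]]]]] := TDec Ta na.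
have [e [s' [l' [Ss' [ns' [Ll' Eb]]]]]] := TDec Tb nb.
have [l'' [Ll'' Ep]] := LP Ss Ss' Ll Ll'.
have := U (SM Ss (Siter d Ss')) Ll''; rewrite -Ep -Ea -Eb => /(_ E).
move/(DS Ss (Siter d Ss')) => [/eqP|/(iter0 Ss')/eqP]; by [rewrite (negbTE ns) | rewrite (negbTE ns')].
Qed.

Lemma ND lc l0 u t : S lc -> lc != 0 -> S l0 -> S u -> u != 0 -> T t ->
  u = (lc * x + l0) * t -> False.
Proof.
move=> Slc nlc Sl0 Su nu Tt E.
have nt : t != 0 by apply/eqP => h; move: nu; rewrite E h mulr0 eqxx.
have [d [s [l [Ss [ns [Ll Et]]]]]] := TDec Tt nt.
have Ll0 : L 1 l0 by have := Lmon (d := 1) Sl0 (ltnSn 0); rewrite expr0 mulr1.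
have [l'' [Ll'' Ep]] := LP Slc Ss Ll0 Ll.
have Lu : L (1 + d) (- u) by apply: LN; have := Lmon (d := 1 + d) Su (ltn0Sn d); rewrite expr0 mulr1.
have := U (SM Slc (Siter 1 Ss)) (LD Ll'' Lu).
rewrite addrA -Ep -Et expr1 -E subrr => /(_ erefl).
move/(DS Slc (Siter 1 Ss)) => [/eqP|/(iter0 Ss)/eqP]; by [rewrite (negbTE nlc) | rewrite (negbTE ns)].
Qed.

End Ore.


Section Main.
Variables (K : fieldType) (R : algType K) (x : nat -> R).

Lemma gs_mono k k' r : (k <= k')%N -> gen_sub x k r -> gen_sub x k' r.
Proof.
move=> kk; elim=> [c|j /andP [j1 jk]|a b _ ha _ hb|a b _ ha _ hb].
- exact: gen_const.
- by apply: gen_var; rewrite j1 (leq_trans jk kk).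
- exact: gen_add.
- exact: gen_mul.
Qed.

Lemma gs0 k : gen_sub x k 0.
Proof. by have := gen_const x k 0; rewrite scale0r. Qed.
Lemma gs1 k : gen_sub x k 1.
Proof. by have := gen_const x k 1; rewrite scale1r. Qed.
Lemma gsN k a : gen_sub x k a -> gen_sub x k (- a).
Proof. by move=> h; have := gen_mul (gen_const x k (-1)) h; rewrite scaleN1r mulN1r. Qed.
Lemma gsX k i : (1 <= k)%N -> gen_sub x k (x k ^+ i).
Proof.
move=> k1; elim: i => [|i IH]; first by rewrite expr0; apply: gs1.
by rewrite exprS; apply: gen_mul => //; apply: gen_var; rewrite k1 leqnn.
Qed.

Lemma gs_0 r : gen_sub x 0 r -> exists c, r = c%:A.
Proof.
elim=> [c|j /andP [j1 j0]|a b _ [c ->] _ [c' ->]|a b _ [c ->] _ [c' ->]].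
- by exists c.
- by move: (leq_trans j1 j0).
- by exists (c + c'); rewrite scalerDl.
- by exists (c * c'); rewrite mulr_algl scalerA.
Qed.

Lemma dom0 a b : gen_sub x 0 a -> gen_sub x 0 b -> a * b = 0 -> a = 0 \/ b = 0.
Proof.
move=> /gs_0 [c ->] /gs_0 [c' ->]; rewrite mulr_algl scalerA => /eqP.
rewrite scaler_eq0 (negbTE (oner_neq0 R)) orbF mulf_eq0 => /orP [] /eqP ->.
  by left; rewrite scale0r.
by right; rewrite scale0r.
Qed.


Variables (N n : nat) (sigma delta : nat -> R -> R) (act : ('I_n -> K) -> R -> R).
Hypothesis HQ : QNA N x sigma delta act.

Lemma ore_gen k : (1 <= k <= N)%N ->
  let S := gen_sub x k.-1 in let sg := sigma k in let dl := delta k in let xk := x k in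
  (forall a, S a -> S (sg a)) /\ (forall a, S a -> S (dl a)) /\
      (forall r, S r -> xk * r = sg r * xk + dl r) /\ (
      forall (m : nat) (r : nat -> R), (forall i, (i < m)%N -> S (r i)) ->
          \sum_(i < m) r i * xk ^+ i = 0 -> forall i, (i < m)%N -> r i = 0) /\
      (forall a b, S a -> S b -> sg (a + b) = sg a + sg b) /\
      (forall a b, S a -> S b -> sg a = sg b -> a = b) /\
      (forall t, gen_sub x k t -> exists (m : nat) (r : nat -> R),
            (forall i, S (r i)) /\ t = \sum_(i < m) r i * xk ^+ i).
Proof.
move=> kN S sg dl xk; case: HQ => _ [/(_ k kN) [[Ssg [sgD [_ [_ [_ [inj _]]]]]] [[Sdl _] [comm [dec fr]]]] _].
by do !split.
Qed.

Lemma dom k : (k <= N)%N -> forall a b, gen_sub x k a -> gen_sub x k b -> a * b = 0 -> a = 0 \/ b = 0.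
Proof.
elim: k => [|k IH] kN; first exact: dom0.
have kN' : (1 <= k.+1 <= N)%N by rewrite kN.
have [Ssg [Sdl [comm [fr [sgD [inj dec]]]]]] := ore_gen kN'.
move=> a b Ta Tb; apply: (@TDomain K R (gen_sub x k) (x k.+1) (sigma k.+1)
  (delta k.+1) (gs0 k) (@gen_add _ _ x k) (@gen_mul _ _ x k) Ssg Sdl comm fr sgD inj
  (IH (ltnW kN)) (gen_sub x k.+1) dec a b Ta Tb).
Qed.


Variables (mu : nat -> nat) (y : nat -> R).
Hypothesis HG : GY_elements N x act mu y.

Lemma yfacts j : (1 <= j <= N)%N ->
  gen_sub x j (y j) /\ y j != 0 /\ prime_elt_in (gen_sub x j) (y j).
Proof.
move=> jN; case: HG => _ [_ [_ [_ [_ [c6 _]]]]].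
have [H _] := c6 j jN.
have j1 : (1 <= j <= j)%N by rewrite (andP jN).1 leqnn.
have [_ pr] := H j j1 (fun j' h => ltac:(exfalso; lia)).
by have := pr; case: pr => nz [[Sy _] _] pr.
Qed.

Lemma yrep hi : (1 <= hi <= N)%N -> exists lc l0, gen_sub x hi.-1 lc /\ lc != 0 /\
  gen_sub x hi.-1 l0 /\ y hi = lc * x hi + l0.
Proof.
move=> hN; case: HG => _ [_ [_ [c4 [c5 _]]]].
pose P := fun j => [&& (1 <= j)%N, (j < hi)%N & mu j == mu hi].
case: (classic (exists j, P j)) => [ex|nex].
  have ub : forall j, P j -> (j <= hi)%N by move=> j /and3P [_ /ltnW ? _].
  case: (ex_maxnP ex ub) => j' /and3P [j1 jh /eqP mj] mx.
  have [c [Sc E]] := c5 hi j' j1 jh (andP hN).2 mj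
    (fun j'' h1 h2 e => ltac:(have := mx j''; rewrite /P e eqxx h2 andbT (leq_trans _ h1) //; move=> /(_ isT); lia)).
  have jN : (1 <= j' <= N)%N by rewrite j1 /=; lia.
  have [Sy [nz _]] := yfacts jN.
  exists (y j'), (- c); split; first by apply: (gs_mono _ Sy); lia.
  by split => //; split; [apply: gsN | rewrite E].
have -> : y hi = x hi.
  apply: c4 => // j j1 jh e; apply: nex; exists j; by rewrite /P j1 jh e eqxx.
exists 1, 0; split; first exact: gs1.
by rewrite oner_neq0 mul1r addr0; split => //; split => //; apply: gs0.
Qed.


Lemma base lo hi : (1 <= lo)%N -> (lo < hi)%N -> (hi <= N)%N ->
  forall r s, gen_sub x hi r -> gen_sub x hi s -> y lo * r = y hi * s ->
  exists t, gen_sub x hi t /\ y lo * r = y lo * y hi * t.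
Proof.
move=> l1 lh hN r s Tr Ts E.
have hN' : (1 <= hi <= N)%N by apply/andP; split => //; lia.
have lN : (1 <= lo <= N)%N by apply/andP; split => //; lia.
have [Syl [nzl _]] := yfacts lN.
have [_ [_ [_ prime]]] := (yfacts hN').2.2.
have Syl' : gen_sub x hi (y lo) by apply: (gs_mono _ Syl); lia.
case: (prime (y lo) r Syl' Tr (ex_intro _ s (conj Ts E))) => [[t [Tt Et]]|[t [Tt Et]]].
  exfalso.
  have [Ssg [Sdl [comm [fr [sgD [inj dec]]]]]] := ore_gen hN'.
  have [lc [l0 [Slc [nlc [Sl0 Ey]]]]] := yrep hN'.
  have Syl'' : gen_sub x hi.-1 (y lo) by apply: (gs_mono _ Syl); lia.
  apply: (@ND K R (gen_sub x hi.-1) (x hi) (sigma hi) (delta hi) (gs0 _) (@gen_add _ _ x _)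
    (@gen_mul _ _ x _) (@gsN _) Ssg Sdl comm fr sgD inj (dom (leq_trans (leq_pred hi) hN))
    (gen_sub x hi) dec lc l0 (y lo) t Slc nlc Sl0 Syl'' nzl Tt).
  by rewrite Et Ey.
by exists t; split => //; rewrite Et mulrA.
Qed.

Lemma LT k M t : (1 <= k)%N -> L (gen_sub x k.-1) (x k) M t -> gen_sub x k t.
Proof.
move=> k1; apply: L_ind; first exact: gs0.
  by move=> *; apply: gen_add.
move=> r i Sr _; apply: gen_mul; last exact: gsX.
by apply: (gs_mono _ Sr); lia.
Qed.

Lemma up lo hi : (1 <= lo)%N -> (lo < hi)%N -> forall d, (hi + d <= N)%N ->
  forall r s, gen_sub x (hi + d) r -> gen_sub x (hi + d) s -> y lo * r = y hi * s ->
  exists t, gen_sub x (hi + d) t /\ y lo * r = y lo * y hi * t.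
Proof.
move=> l1 lh; elim=> [|d IH] hdN.
  by rewrite addn0 in hdN *; apply: base.
have kN : (1 <= (hi + d).+1 <= N)%N by apply/andP; split; lia.
have [Ssg [Sdl [comm [fr [sgD [inj dec]]]]]] := ore_gen kN.
have hN' : (1 <= hi <= N)%N by apply/andP; split; lia.
have lN : (1 <= lo <= N)%N by apply/andP; split; lia.
have Syl : gen_sub x (hi + d) (y lo) by apply: (gs_mono _ (yfacts lN).1); lia.
have Syh : gen_sub x (hi + d) (y hi) by apply: (gs_mono _ (yfacts hN').1); lia.
move=> r s; rewrite addnS => Tr Ts E.
have [M [t [Lt Et]]] := @Lstep K R (gen_sub x (hi + d)) (x (hi + d).+1) (gs0 _)
  (@gen_add _ _ x _) (@gen_mul _ _ x _) (@gsN _) fr (gen_sub x (hi + d).+1) dec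
  (y lo) (y hi) Syl Syh (IH ltac:(lia)) r s Tr Ts E.
by exists t; split => //; apply: (LT (M := M)).
Qed.

End Main.

Theorem propositionA2 (K : fieldType) (R : algType K) (N n : nat)
    (x : nat -> R) (sigma delta : nat -> R -> R)
    (act : ('I_n -> K) -> R -> R) (mu : nat -> nat) (y : nat -> R) :
  [pchar K] =i pred0 ->
  QNA N x sigma delta act ->
  GY_elements N x act mu y ->
  forall i j, (1 <= i <= N)%N -> (1 <= j <= N)%N -> i <> j ->
  forall a : R,
    ((exists r, a = y i * r) /\ (exists r, a = y j * r)) <->
    (exists r, a = y i * y j * r).
Proof.
move=> _ HQ HG i j iN jN ij a.
have Rall : forall r, gen_sub x N r by case: HQ.
have qc : forall i j, (1 <= i <= N)%N -> (1 <= j <= N)%N ->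
    exists alpha : K, alpha != 0 /\ y i * y j = alpha *: (y j * y i).
  by case: HG => _ [_ [_ [_ [_ [_ c7]]]]].
have key : forall lo hi r s, (1 <= lo)%N -> (lo < hi)%N -> (hi <= N)%N ->
    y lo * r = y hi * s -> exists t, y lo * r = y lo * y hi * t.
  move=> lo hi r s l1 lh hN E.
  have := up HQ HG l1 lh (d := N - hi) ltac:(lia).
  rewrite subnKC // => /(_ r s (Rall r) (Rall s) E) [t [_ Et]].
  by exists t.
split.
  move=> [[r Er] [s Es]].
  case: (ltngtP i j) => [lt|gt|eq]; last by [].
  - have [t Et] := key i j r s (andP iN).1 lt (andP jN).2 (etrans (esym Er) Es).
    by exists t; rewrite Er.
  - have [t Et] := key j i s r (andP jN).1 gt (andP iN).2 (etrans (esym Es) Er).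
    have [al [_ Eal]] := qc j i jN iN.
    by exists (al *: t); rewrite Es Et Eal -scalerAl scalerAr.
move=> [r Er]; split; first by exists (y j * r); rewrite Er mulrA.
have [al [_ Eal]] := qc i j iN jN.
by exists (al *: (y i * r)); rewrite Er Eal -scalerAl -mulrA scalerAr.
Qed.
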